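(* Let $0<\eta<1$, $0<\alpha<\frac1\eta$, $0<\beta<\frac{1-\alpha\eta}{1-\eta}$ and $\theta\in(0,\tfrac12)$. Set $$k_1=1+\frac{\max\{\alpha,\beta\}}{(1-\alpha\eta)-\beta(1-\eta)},\qquad k_2=\theta\left[1+\frac{\beta+\min\{(\alpha-\beta)\theta,(\alpha-\beta)(1-\theta)\}}{(1-\alpha\eta)-\beta(1-\eta)}\right],\qquad \gamma=\frac{k_2}{k_1}.$$ If $y\in C([0,1])$ and $y\ge 0$, then the unique solution $u$ of the boundary value problem $$u''(t)+y(t)=0,\quad t\in[0,1],\qquad u(0)=\beta u(\eta),\quad u(1)=\alpha u(\eta)$$ satisfies $$\min_{\theta\le t\le 1-\theta} u(t)\ge \gamma\,\|u\|_1,\qquad\text{where } \|u\|_1=\sup\{|u(t)|: 0\le t\le 1\}.$$ *)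

(* Defs.v *)
From Stdlib Require Import Reals Lra.
From Coquelicot Require Import Coquelicot.
Open Scope R_scope.

Definition cont_on (a b : R) (f : R -> R) : Prop :=
  forall t, a <= t <= b ->
    filterlim f (within (fun x => a <= x <= b) (locally t)) (locally (f t)).

Definition sup_norm01 (u : R -> R) : Rbar :=
  Lub_Rbar (fun r => exists t, 0 <= t <= 1 /\ r = Rabs (u t)).

Definition min_on (a b : R) (u : R -> R) : Rbar :=
  Glb_Rbar (fun r => exists t, a <= t <= b /\ r = u t).

Definition den (eta alpha beta : R) : R := (1 - alpha * eta) - beta * (1 - eta).

Definition k1 (eta alpha beta : R) : R :=
  1 + Rmax alpha beta / den eta alpha beta.

Definition k2 (eta alpha beta theta : R) : R :=
  theta * (1 + (beta + Rmin ((alpha - beta) * theta) ((alpha - beta) * (1 - theta)))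
                 / den eta alpha beta).

Definition gamma (eta alpha beta theta : R) : R :=
  k2 eta alpha beta theta / k1 eta alpha beta.

(* Main.v *)
Require Import Defs.
From Stdlib Require Import Reals.
From Coquelicot Require Import Coquelicot.
From Stdlib Require Import Lra Psatz.
Open Scope R_scope.

Lemma mvt_strict (f df : R -> R) (a b : R) : a < b ->
  (forall x, a < x < b -> is_derive f x (df x)) ->
  (forall x, a <= x <= b -> continuity_pt f x) ->
  exists c, a < c < b /\ f b - f a = df c * (b - a).
Proof.
  intros hab hd hc.
  assert (pr1 : forall c, a < c < b -> derivable_pt f c).
  { intros c hc'. exists (df c). apply is_derive_Reals. now apply hd. }
  assert (pr2 : forall c, a < c < b -> derivable_pt id c).
  { intros c _. apply derivable_pt_id. }
  destruct (MVT f id a b pr1 pr2 hab hc) as [c [P HP]].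
  { intros c _. apply derivable_continuous_pt, derivable_pt_id. }
  exists c; split; [exact P|].
  rewrite (derive_pt_eq_0 f c (df c) (pr1 c P)) in HP.
  2: { apply is_derive_Reals. now apply hd. }
  rewrite (derive_pt_eq_0 id c 1 (pr2 c P)) in HP.
  2: { apply derivable_pt_lim_id. }
  unfold id in HP. lra.
Qed.

Definition clamp (t : R) := Rmax 0 (Rmin 1 t).

Lemma clamp_id t : 0 <= t <= 1 -> clamp t = t.
Proof. intros. unfold clamp, Rmax, Rmin; repeat destruct Rle_dec; lra. Qed.

Lemma clamp_in t : 0 <= clamp t <= 1.
Proof. unfold clamp, Rmax, Rmin; repeat destruct Rle_dec; lra. Qed.

Lemma clamp_lip x t : 0 <= x <= 1 -> Rabs (clamp t - x) <= Rabs (t - x).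
Proof. intros. unfold clamp, Rmax, Rmin; repeat destruct Rle_dec;
  unfold Rabs; repeat destruct Rcase_abs; lra. Qed.

Lemma clamp_cont x : 0 <= x <= 1 ->
  filterlim clamp (locally x) (within (fun t => 0 <= t <= 1) (locally x)).
Proof.
  intros hx P HP. unfold within in HP. destruct HP as [eps HP].
  exists eps. intros t ht. apply HP.
  - unfold ball in *; simpl in *. unfold AbsRing_ball, abs, minus, plus, opp in *; simpl in *.
    pose proof (clamp_lip x t hx). unfold Rminus in H. lra.
  - apply clamp_in.
Qed.

Lemma v_cont (u : R -> R) x : cont_on 0 1 u -> 0 <= x <= 1 ->
  continuity_pt (fun t => u (clamp t)) x.
Proof.
  intros hu hx. apply continuity_pt_filterlim.
  rewrite (clamp_id x hx).
  eapply filterlim_comp. apply clamp_cont; auto. apply hu; auto.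
Qed.

Lemma v_deriv (u u' : R -> R) x : 0 < x < 1 -> is_derive u x (u' x) ->
  is_derive (fun t => u (clamp t)) x (u' x).
Proof.
  intros hx hd. eapply is_derive_ext_loc; [|exact hd].
  assert (H1 : locally x (fun t => 0 < t)) by (apply open_gt; lra).
  assert (H2 : locally x (fun t => t < 1)) by (apply open_lt; lra).
  generalize (filter_and _ _ H1 H2). apply filter_imp.
  intros t [h1 h2]. rewrite clamp_id; lra.
Qed.

Lemma concave (u u' y : R -> R) :
  (forall t, 0 <= t <= 1 -> 0 <= y t) ->
  cont_on 0 1 u ->
  (forall t, 0 < t < 1 -> is_derive u t (u' t)) ->
  (forall t, 0 < t < 1 -> is_derive u' t (- y t)) ->
  forall a x b, 0 <= a < x -> x < b <= 1 ->
  (b - x) * u a + (x - a) * u b <= (b - a) * u x.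
Proof.
  intros hy hu hd1 hd2.
  assert (mono : forall p q, 0 < p < q -> q < 1 -> u' q <= u' p).
  { intros p q hp hq.
    destruct (mvt_strict u' (fun t => - y t) p q) as [c [hc e]]; try lra.
    - intros; apply hd2; lra.
    - intros z hz. apply derivable_continuous_pt. exists (- y z).
      apply is_derive_Reals, hd2; lra.
    - assert (0 <= y c) by (apply hy; lra). nra. }
  set (v := fun t => u (clamp t)).
  assert (hv : forall t, 0 <= t <= 1 -> v t = u t) by (intros; unfold v; rewrite clamp_id; auto).
  intros a x b ha hb.
  destruct (mvt_strict v u' a x) as [c1 [hc1 e1]]; try lra.
  { intros; apply v_deriv; [lra|]. apply hd1; lra. }
  { intros; apply v_cont; auto; lra. }
  destruct (mvt_strict v u' x b) as [c2 [hc2 e2]]; try lra.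
  { intros; apply v_deriv; [lra|]. apply hd1; lra. }
  { intros; apply v_cont; auto; lra. }
  rewrite !hv in e1, e2 by lra.
  assert (u' c2 <= u' c1) by (apply mono; lra).
  assert (u x - u a = u' c1 * (x - a)) by lra.
  assert (u b - u x = u' c2 * (b - x)) by lra.
  assert (0 <= (b - x) * (x - a)) by nra.
  assert (0 <= ((b - x) * (x - a)) * (u' c1 - u' c2)) by (apply Rmult_le_pos; lra).
  replace (u a) with (u x - u' c1 * (x - a)) by lra.
  replace (u b) with (u x + u' c2 * (b - x)) by lra.
  nra.
Qed.

Lemma gamma_le (eta alpha beta theta : R) :
  0 < den eta alpha beta -> 0 < alpha -> 0 < beta -> 0 < theta < 1/2 ->
  gamma eta alpha beta theta <= theta.
Proof.
  intros hd ha hb ht. unfold gamma, k1, k2.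
  set (d := den eta alpha beta) in *.
  set (M := Rmax alpha beta).
  set (m := Rmin ((alpha - beta) * theta) ((alpha - beta) * (1 - theta))).
  assert (hM : beta + m <= M /\ 0 <= M).
  { unfold M, m, Rmax, Rmin; repeat destruct Rle_dec; nra. }
  assert (hA : (beta + m) / d <= M / d).
  { unfold Rdiv; apply Rmult_le_compat_r; [left; apply Rinv_0_lt_compat; lra | lra]. }
  assert (hB : 0 <= M / d).
  { unfold Rdiv; apply Rmult_le_pos; [lra | left; apply Rinv_0_lt_compat; lra]. }
  set (A := (beta + m) / d) in *. set (B := M / d) in *.
  apply (Rle_trans _ (theta * (1 + B) / (1 + B))).
  - unfold Rdiv; apply Rmult_le_compat_r; [left; apply Rinv_0_lt_compat; lra | nra].
  - right; field; lra.
Qed.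

Theorem lemma2p5 (eta alpha beta theta : R) (y u u' : R -> R) :
  0 < eta < 1 ->
  0 < alpha < 1 / eta ->
  0 < beta < (1 - alpha * eta) / (1 - eta) ->
  0 < theta < 1 / 2 ->
  cont_on 0 1 y ->
  (forall t, 0 <= t <= 1 -> 0 <= y t) ->
  (* u is a solution of u'' + y = 0 on [0,1] with the boundary conditions *)
  cont_on 0 1 u ->
  (forall t, 0 < t < 1 -> is_derive u t (u' t)) ->
  (forall t, 0 < t < 1 -> is_derive u' t (- y t)) ->
  u 0 = beta * u eta ->
  u 1 = alpha * u eta ->
  Rbar_le (Rbar_mult (gamma eta alpha beta theta) (sup_norm01 u))
          (min_on theta (1 - theta) u).
Proof.
  intros he ha hb ht _ hy hu hd1 hd2 h0 h1.
  pose proof (concave u u' y hy hu hd1 hd2) as cc.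
  assert (hden : 0 < den eta alpha beta).
  { unfold den. destruct hb as [hb1 hb2].
    apply (Rmult_lt_compat_r (1 - eta)) in hb2; [|lra].
    replace ((1 - alpha * eta) / (1 - eta) * (1 - eta)) with (1 - alpha * eta) in hb2
      by (field; lra). lra. }
  assert (hue : 0 <= u eta).
  { pose proof (cc 0 eta 1 ltac:(lra) ltac:(lra)) as c.
    rewrite h0, h1 in c. unfold den in hden.
    assert (u eta * (1 - alpha * eta - beta * (1 - eta)) >= 0) by nra. nra. }
  assert (hpos : forall t, 0 <= t <= 1 -> 0 <= u t).
  { intros t htt.
    assert (0 <= u 0) by (rewrite h0; nra).
    assert (0 <= u 1) by (rewrite h1; nra).
    destruct (Req_dec t 0) as [->|]; auto.
    destruct (Req_dec t 1) as [->|]; auto.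
    pose proof (cc 0 t 1 ltac:(lra) ltac:(lra)). nra. }
  assert (key : forall t s, theta <= t <= 1 - theta -> 0 <= s <= 1 -> theta * u s <= u t).
  { intros t s htt hs.
    assert (0 <= u t) by (apply hpos; lra).
    assert (0 <= u s) by (apply hpos; lra).
    assert (0 <= u 0) by (apply hpos; lra).
    assert (0 <= u 1) by (apply hpos; lra).
    destruct (Rtotal_order s t) as [hst|[hst|hst]].
    - pose proof (cc s t 1 ltac:(lra) ltac:(lra)).
      assert ((1 - t) * u s <= (1 - s) * u t) by nra.
      assert ((1 - s) * u t <= u t) by nra.
      assert (theta * u s <= (1 - t) * u s) by nra. lra.
    - subst. nra.
    - pose proof (cc 0 t s ltac:(lra) ltac:(lra)).
      assert (t * u s <= s * u t) by nra.
      assert (s * u t <= u t) by nra.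
      assert (theta * u s <= t * u s) by nra. lra. }
  pose proof (gamma_le eta alpha beta theta hden ltac:(lra) ltac:(lra) ht) as hg.
  unfold sup_norm01, min_on.
  set (E := fun r => exists t, 0 <= t <= 1 /\ r = Rabs (u t)).
  set (F := fun r => exists t, theta <= t <= 1 - theta /\ r = u t).
  assert (ub : forall t, theta <= t <= 1 - theta -> is_ub_Rbar E (u t / theta)).
  { intros t htt r [s [hs ->]]. simpl.
    rewrite Rabs_pos_eq by (apply hpos; auto).
    pose proof (key t s htt hs).
    apply (Rmult_le_reg_l theta); [lra|].
    replace (theta * (u t / theta)) with (u t) by (field; lra). lra. }
  destruct (Lub_Rbar_correct E) as [hub hlub].
  assert (hge : Rbar_le (Rabs (u 0)) (Lub_Rbar E)).
  { apply hub. exists 0; split; [lra|auto]. }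
  assert (hle : forall t, theta <= t <= 1 - theta -> Rbar_le (Lub_Rbar E) (u t / theta)).
  { intros t htt. apply hlub, ub, htt. }
  pose proof (hle theta ltac:(lra)) as hl0.
  destruct (Lub_Rbar E) as [S| |] eqn:eS; simpl in hge, hl0; try contradiction.
  assert (hS : 0 <= S) by (pose proof (Rabs_pos (u 0)); lra).
  destruct (Glb_Rbar_correct F) as [_ hglb].
  change (Rbar_le (Finite (gamma eta alpha beta theta * S)) (Glb_Rbar F)). apply hglb.
  intros r [t [htt ->]]. simpl.
  specialize (hle t htt). simpl in hle.
  assert (theta * S <= u t).
  { apply (Rmult_le_compat_l theta) in hle; [|lra].
    replace (theta * (u t / theta)) with (u t) in hle by (field; lra). lra. }
  nra.
Qed.
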